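(* Let $G$ be a group such that $Q=\mathrm{Core}(G)$ is latin, and let $\theta:G\times G\to G$ be given by $\theta_{x,y}=xy^{-1}$ (a quandle cocycle of $Q$ with values in $G$). Then $\theta$ is cohomologous to the trivial cocycle if and only if $G$ is abelian.
   Context: $\mathrm{Core}(G)$ is the quandle on $G$ with $x*y=xy^{-1}x$; a quandle is latin if every right translation $y\mapsto y*x$ is bijective. A quandle cocycle of a quandle $Q$ with values in $G$ is $\theta:Q\times Q\to G$ with $\theta_{x*y,x*z}\theta_{x,z}=\theta_{x,y*z}\theta_{y,z}$ and $\theta_{x,x}=1$; $\theta$ is cohomologous to the trivial cocycle (constantly $1$) if there exists $\gamma:Q\to G$ with $\theta_{x,y}=\gamma_{x*y}\gamma_y^{-1}$ for all $x,y\in Q$. *)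

(* Defs.v *)
From Stdlib Require Import Program.Basics.

Record Group := {
  carrier :> Type;
  gmul : carrier -> carrier -> carrier;
  ginv : carrier -> carrier;
  gone : carrier;
  gmul_assoc : forall x y z, gmul x (gmul y z) = gmul (gmul x y) z;
  gmul_1l : forall x, gmul gone x = x;
  gmul_Vl : forall x, gmul (ginv x) x = gone
}.

Arguments gmul {g}.
Arguments ginv {g}.
Arguments gone {g}.

Definition bijective {A B : Type} (f : A -> B) : Prop :=
  exists g : B -> A, (forall a, g (f a) = a) /\ (forall b, f (g b) = b).

Definition core_op {G : Group} (x y : G) : G := gmul (gmul x (ginv y)) x.

Definition core_latin (G : Group) : Prop :=
  forall x : G, bijective (fun y : G => core_op y x).

Definition theta {G : Group} (x y : G) : G := gmul x (ginv y).

Definition cohomologous_to_trivial {G : Group} (c : G -> G -> G) : Prop :=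
  exists gamma : G -> G,
    forall x y : G, c x y = gmul (gamma (core_op x y)) (ginv (gamma y)).

Definition abelian (G : Group) : Prop := forall x y : G, gmul x y = gmul y x.

(* Main.v *)
Require Import Defs.
From Stdlib Require Import Setoid.

Section GL.
Variable G : Group.
Local Infix "*" := (@gmul G).

Lemma mulV (x : G) : x * ginv x = gone.
Proof.
  set (y := ginv x).
  rewrite <- (gmul_1l G (x * y)).
  rewrite <- (gmul_Vl G y) at 1.
  rewrite <- gmul_assoc, (gmul_assoc _ y x y).
  unfold y at 2 3; rewrite gmul_Vl, gmul_1l. apply gmul_Vl.
Qed.

Lemma mul1 (x : G) : x * gone = x.
Proof. rewrite <- (gmul_Vl G x), gmul_assoc, mulV. apply gmul_1l. Qed.

Lemma invK (x : G) : ginv (ginv x) = x.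
Proof.
  rewrite <- (mul1 (ginv (ginv x))), <- (gmul_Vl G x), gmul_assoc, gmul_Vl. apply gmul_1l.
Qed.

Lemma inv1 : ginv (@gone G) = gone.
Proof. rewrite <- (mul1 (ginv gone)). apply gmul_Vl. Qed.

Lemma Vmul (x y : G) : ginv x * (x * y) = y.
Proof. rewrite gmul_assoc, gmul_Vl. apply gmul_1l. Qed.

Lemma mulVK (x y : G) : x * (ginv x * y) = y.
Proof. rewrite gmul_assoc, mulV. apply gmul_1l. Qed.

Lemma cancel_l (a b c : G) : a * b = a * c -> b = c.
Proof. intro H. rewrite <- (Vmul a b), H. apply Vmul. Qed.

Lemma invM (x y : G) : ginv (x * y) = ginv y * ginv x.
Proof.
  apply (cancel_l (x*y)). rewrite mulV, <- gmul_assoc, (gmul_assoc G y), mulV, gmul_1l, mulV. reflexivity.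
Qed.

Lemma cancel_r (a b c : G) : b * a = c * a -> b = c.
Proof. intro H. rewrite <- (mul1 b), <- (mul1 c), <- (mulV a), !gmul_assoc, H. reflexivity. Qed.
End GL.

Arguments mulV {G}. Arguments mul1 {G}. Arguments invK {G}. Arguments inv1 {G}.
Arguments Vmul {G}. Arguments mulVK {G}. Arguments invM {G}.

Ltac gnorm := repeat (rewrite ?invM, ?invK, ?inv1, ?gmul_1l, ?mul1, ?mulV, ?gmul_Vl,
   ?Vmul, ?mulVK, <- ?gmul_assoc).

Theorem proposition4p5 (G : Group) (HQ : core_latin G) :
  cohomologous_to_trivial (@theta G) <-> abelian G.
Proof.
  destruct (HQ gone) as [s [Hs1 Hs2]].
  unfold core_op in Hs1, Hs2. cbv beta in Hs1, Hs2.
  rewrite inv1 in Hs1, Hs2.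
  setoid_rewrite mul1 in Hs1. setoid_rewrite mul1 in Hs2.
  split.
  - intros [gam H]. unfold theta, core_op in H.
    set (c := gam gone).
    assert (Hg : forall z, gam z = gmul (s z) c).
    { intro z. specialize (H (s z) gone). rewrite inv1, !mul1, Hs2 in H.
      rewrite H. fold c. gnorm. reflexivity. }
    assert (Hz : forall x z : G, gmul (ginv z) x = gmul x (ginv z)).
    { intros x z.
      specialize (H x (gmul z z)). rewrite !Hg, Hs1 in H.
      assert (E : s (gmul (gmul x (ginv (gmul z z))) x) = gmul (gmul x (ginv (gmul z z))) z).
      { apply (cancel_r _ (gmul (ginv c) (ginv z))). rewrite H at 2. gnorm. reflexivity. }
      assert (E2 := f_equal (fun w => gmul w w) E). cbv beta in E2.
      rewrite Hs2 in E2. revert E2. gnorm. intro E2.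
      apply cancel_l in E2. apply cancel_l in E2. exact E2. }
    intros a b. rewrite <- (invK a). apply Hz.
  - intro Hab. exists s. intros x y. unfold theta, core_op.
    set (u := s y).
    assert (Hy : y = gmul u u) by (unfold u; rewrite Hs2; reflexivity).
    assert (E : s (gmul (gmul x (ginv y)) x) = gmul x (ginv u)).
    { rewrite <- (Hs1 (gmul x (ginv u))). f_equal. rewrite Hy. gnorm.
      f_equal. rewrite (Hab (ginv u) x). gnorm. reflexivity. }
    rewrite E, Hy. fold u. gnorm. reflexivity.
Qed.
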